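(* Let $\beta\in[0,\tfrac12)$ and let $u,v:\mathbb{T}_m\to\mathbb{R}$ be bounded functions such that $-\Delta_\beta u(x)\ge-\Delta_\beta v(x)$ for all $x\in\mathbb{T}_m$ and $\liminf_{x\to y}u(x)\ge\limsup_{x\to y}v(x)$ for every $y\in\partial\mathbb{T}_m$. Then $u\ge v$ on $\mathbb{T}_m$. Moreover, if $\beta>0$, then either $u>v$ on $\mathbb{T}_m$ or $u\equiv v$.
   Context: Tree: for an integer $m\ge2$, $\mathbb{T}_m$ has vertices the root $\emptyset$ and all finite sequences $(\emptyset,a_1,\dots,a_k)$, $a_i\in\{0,\dots,m-1\}$; $|x|$ is the level, successors of $x$ are $(x,i)$, $\hat x$ is the immediate predecessor of $x\ne\emptyset$. A branch is an infinite sequence $(x_n)_{n\ge0}$ with $x_0=\emptyset$ and $x_{n+1}$ a successor of $x_n$; $\partial\mathbb{T}_m$ is the set of branches; for $y=(x_n)$, $\liminf_{x\to y}u(x)=\liminf_n u(x_n)$ and $\limsup_{x\to y}v(x)=\limsup_n v(x_n)$. Operator: $p_\beta=1$ if $\beta=0$, $p_\beta=\beta/(1-\beta)$ if $\beta\in(0,1)$. $\Delta_\beta u(\emptyset)=\frac1m\sum_{i=0}^{m-1}u(\emptyset,i)-u(\emptyset)$ and, for $x\ne\emptyset$, $\Delta_\beta u(x)=\big(\beta u(\hat x)+\frac{1-\beta}{m}\sum_{i=0}^{m-1}u(x,i)-u(x)\big)p_\beta^{-|x|}$. *)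

(* Defs.v *)
From mathcomp Require Import all_boot all_order all_algebra.
From mathcomp Require Import all_classical all_reals all_analysis.
Set Implicit Arguments. Unset Strict Implicit. Unset Printing Implicit Defensive.
Import Order.TTheory GRing.Theory Num.Theory.
Local Open Scope ring_scope.

(* Vertices of the m-ary tree T_m: finite sequences of digits in {0,..,m-1}.
   Encoding convention: the sequence is stored in REVERSE order, i.e. the
   vertex (root, a_1, ..., a_k) is the list [:: a_k; ...; a_1]. *)
Definition vertex (m : nat) := seq 'I_m.

Definition level m (x : vertex m) : nat := size x.
Definition succ m (x : vertex m) (i : 'I_m) : vertex m := i :: x.
Definition pred_vertex m (x : vertex m) : vertex m := behead x.

(* A branch is determined by the infinite sequence of digits b 0, b 1, ...;
   its n-th vertex is (root, b 0, ..., b (n-1)) (stored reversed). *)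
Fixpoint branch_vertex m (b : nat -> 'I_m) (n : nat) : vertex m :=
  match n with
  | 0 => [::]
  | n'.+1 => b n' :: branch_vertex b n'
  end.

Definition pbeta {R : realType} (beta : R) : R :=
  if beta == 0 then 1 else beta / (1 - beta).

Definition Delta {R : realType} (m : nat) (beta : R) (u : vertex m -> R)
  (x : vertex m) : R :=
  if x is [::] then
    (m%:R)^-1 * (\sum_(i < m) u (succ x i)) - u x
  else
    (beta * u (pred_vertex x) + (1 - beta) / m%:R * (\sum_(i < m) u (succ x i))
      - u x) * (pbeta beta) ^- (level x).

(* Main.v *)
Require Import Defs.
From mathcomp Require Import all_boot all_order all_algebra.
From mathcomp Require Import all_classical all_reals all_analysis.
From mathcomp Require Import lra zify.
Import Order.TTheory GRing.Theory Num.Theory.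
Local Open Scope ring_scope.
Set Implicit Arguments. Unset Strict Implicit.

Lemma limsup_contra (R : realType) (a c : nat -> R) (N : nat) (d : R) :
  bounded_fun a -> bounded_fun c -> 0 < d ->
  (forall n, (N <= n)%N -> a n + d <= c n) -> limn_inf a < limn_sup c.
Proof.
move=> ba bc d0 H.
rewrite limn_infE // limn_supE //.
have key : forall k j, infs a k + d <= sups c j.
  move=> k j; pose n := maxn N (maxn k j).
  have h1 : infs a k <= a n.
    rewrite /infs /=; apply: ge_inf.
      exact/has_lbound_sdrop/bounded_fun_has_lbound.
    exists n => //=; rewrite /n; lia.
  have h2 : c n <= sups c j.
    rewrite /sups /=; apply: ub_le_sup.
      exact/has_ubound_sdrop/bounded_fun_has_ubound.
    exists n => //=; rewrite /n; lia.
  have h3 := H n (leq_maxl _ _).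
  lra.
have h : sup (range (infs a)) <= inf (range (sups c)) - d.
  apply: ge_sup; first by exists (infs a 0); exists 0%N.
  move=> y [k _ <-]; rewrite lerBrDr.
  apply: lb_le_inf; first by exists (sups c 0); exists 0%N.
  by move=> z [j _ <-]; exact: key.
lra.
Qed.

Lemma bounded_comp (R : realType) (T : Type) (f : T -> R) (g : nat -> T) :
  bounded_fun f -> bounded_fun (fun n => f (g n)).
Proof.
move=> [M [Mr HM]]; exists M; split=> // N MN n _; exact: HM.
Qed.

Definition subh (R : realType) m (beta : R) (w : vertex m -> R) :=
  forall x : vertex m, w x <= (if x is [::] then m%:R^-1 * \sum_(i < m) w (i :: x)
    else beta * w (behead x) + (1 - beta) / m%:R * \sum_(i < m) w (i :: x)).

Lemma pbeta_gt0 (R : realType) (beta : R) : 0 <= beta -> beta < 1 -> 0 < pbeta beta.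
Proof.
move=> b0 b1; rewrite /pbeta; case: eqP => [_|ne]; first exact: ltr01.
apply: divr_gt0; last by rewrite subr_gt0.
by rewrite lt_neqAle eq_sym b0 andbT; apply/eqP.
Qed.

Lemma subh_of (R : realType) m (beta : R) (u v : vertex m -> R) :
  0 <= beta -> beta < 1 ->
  (forall x, - Delta beta u x >= - Delta beta v x) -> subh beta (fun x => v x - u x).
Proof.
move=> b0 b1 hD x; have := hD x; rewrite /Delta /succ /pred_vertex /level.
case: x => [|a x] /=.
  rewrite sumrB mulrBr; lra.
have pp : 0 < (pbeta beta) ^- (size (a :: x)).
  by rewrite invr_gt0 exprn_gt0 // pbeta_gt0.
rewrite lerN2 ler_pM2r // sumrB mulrBr; lra.
Qed.

Definition amax (R : realType) m (w : vertex m -> R) (i0 : 'I_m) (z : vertex m) : 'I_m :=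
  [arg max_(i > i0) w (i :: z)]%O.

Lemma amax_ge (R : realType) m (w : vertex m -> R) (i0 : 'I_m) z j :
  w (j :: z) <= w (amax w i0 z :: z).
Proof. by rewrite /amax; case: arg_maxP => // i _ H; exact: H. Qed.

Lemma avg_le (R : realType) m (w : vertex m -> R) (i0 : 'I_m) z :
  m%:R^-1 * \sum_(j < m) w (j :: z) <= w (amax w i0 z :: z).
Proof.
have hm : (0 < m%:R :> R) by rewrite ltr0n (leq_ltn_trans (leq0n _) (ltn_ord i0)).
have : \sum_(j < m) w (j :: z) <= \sum_(j < m) w (amax w i0 z :: z).
  by apply: ler_sum => j _; exact: amax_ge.
move=> Hs; rewrite sumr_const card_ord in Hs.
rewrite -(ler_pM2l hm) mulrA divff ?gt_eqF // mul1r mulr_natl //.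
Qed.

Definition good (R : realType) m (w : vertex m -> R) (z : vertex m) :=
  z = [::] \/ w (behead z) <= w z.

Lemma good_step (R : realType) m (beta : R) (w : vertex m -> R) (i0 : 'I_m) :
  0 <= beta -> beta < 1 -> subh beta w ->
  forall z, good w z -> w z <= w (amax w i0 z :: z).
Proof.
move=> b0 b1 hs z hg; have hA := avg_le w i0 z; have hz := hs z.
case: z hg hA hz => [|a z] hg /= hA hz; first lra.
case: hg => // hg; rewrite /= in hg.
rewrite -mulrA in hz.
move: hA hz hg; set A := _ * \sum_(_ < _) _; set W := w (amax _ _ _ :: _).
move=> hA hz hg; nra.
Qed.

Fixpoint ext (R : realType) m (w : vertex m -> R) (i0 : 'I_m) (y : vertex m) (k : nat)
  : vertex m :=
  if k is k'.+1 then amax w i0 (ext w i0 y k') :: ext w i0 y k' else y.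

Lemma ext_good (R : realType) m (beta : R) (w : vertex m -> R) (i0 : 'I_m) y :
  0 <= beta -> beta < 1 -> subh beta w -> good w y ->
  forall k, good w (ext w i0 y k) /\ w y <= w (ext w i0 y k).
Proof.
move=> b0 b1 hs gy; elim=> [|k [gk hk]] /=; first by split.
have := good_step i0 b0 b1 hs gk => h; split; first by right.
exact: le_trans h.
Qed.

Definition gvert (R : realType) m (w : vertex m -> R) (i0 : 'I_m) (y : vertex m) n :=
  if (n <= size y)%N then drop (size y - n) y else ext w i0 y (n - size y).

Definition bbr (R : realType) m (w : vertex m -> R) (i0 : 'I_m) (y : vertex m) n :=
  head i0 (gvert w i0 y n.+1).

Lemma gvertS (R : realType) m (w : vertex m -> R) (i0 : 'I_m) y n :
  gvert w i0 y n.+1 = head i0 (gvert w i0 y n.+1) :: gvert w i0 y n.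
Proof.
rewrite /gvert; case: (ltngtP n (size y)) => hn.
- rewrite (drop_nth i0) ?subnSK //=; lia.
- by rewrite subSn ?(ltnW hn).
- by rewrite hn subnn subSn // subnn /= drop0.
Qed.

Lemma branch_gvert (R : realType) m (w : vertex m -> R) (i0 : 'I_m) y n :
  branch_vertex (bbr w i0 y) n = gvert w i0 y n.
Proof.
elim: n => [|n IH]; first by rewrite /gvert leq0n subn0 drop_size.
by rewrite /= IH [RHS]gvertS.
Qed.

Lemma gvert_ext (R : realType) m (w : vertex m -> R) (i0 : 'I_m) y n :
  (size y <= n)%N -> gvert w i0 y n = ext w i0 y (n - size y).
Proof.
move=> h2; rewrite /gvert; case: (leqP n (size y)) => h1 //.
have -> : n = size y by lia.
by rewrite subnn drop0.
Qed.

Lemma goodex (R : realType) m (w : vertex m -> R) :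
  forall x, exists y, good w y /\ w x <= w y.
Proof.
elim=> [|a x [y [gy hy]]]; first by exists [::]; split => //; left.
case: (leP (w x) (w (a :: x))) => h.
  by exists (a :: x); split => //; right.
by exists y; split => //; apply: le_trans hy; apply: ltW.
Qed.

Unset Implicit Arguments.

Theorem theorem2p2 (R : realType) (m : nat) (hm : (2 <= m)%N) (beta : R)
  (hb0 : 0 <= beta) (hb1 : beta < 1 / 2)
  (u v : vertex m -> R) (hu : bounded_fun u) (hv : bounded_fun v)
  (hDelta : forall x : vertex m, - Delta beta u x >= - Delta beta v x)
  (hbd : forall b : nat -> 'I_m,
      limn_inf (fun n => u (branch_vertex b n))
      >= limn_sup (fun n => v (branch_vertex b n))) :
  (forall x : vertex m, u x >= v x) /\
  (0 < beta -> (forall x : vertex m, u x > v x) \/ (forall x : vertex m, u x = v x)).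
Proof.
have b1 : beta < 1 by lra.
pose w := fun x => v x - u x.
have hs : subh beta w := subh_of hb0 b1 hDelta.
have i0 : 'I_m := Ordinal (leq_trans (isT : (0 < 2)%N) hm).
have part1 : forall x : vertex m, u x >= v x.
  move=> x; rewrite leNgt; apply/negP => hx.
  have [y [gy hy]] := goodex w x.
  have H := hbd (bbr w i0 y).
  have : limn_inf (fun n => u (branch_vertex (bbr w i0 y) n))
       < limn_sup (fun n => v (branch_vertex (bbr w i0 y) n)).
    apply: (@limsup_contra _ _ _ (size y) (w x)).
    - exact: bounded_comp.
    - exact: bounded_comp.
    - by rewrite /w subr_gt0.
    - move=> n hn; rewrite branch_gvert gvert_ext //.
      have [_ h] := ext_good i0 hb0 b1 hs gy (n - size y).
      move: h hy; rewrite /w; lra.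
  by rewrite ltNge H.
split => // bpos.
have wle : forall x, w x <= 0 by move=> x; rewrite /w subr_le0.
case: (pselect (exists x, w x = 0)) => [[x0 hx0]|nz]; last first.
  left => x; have := wle x; rewrite le_eqVlt => /orP[/eqP e|].
    by exfalso; apply: nz; exists x.
  by rewrite /w subr_lt0.
right.
have up : forall x, w x = 0 -> w [::] = 0.
  elim=> [//|a x IH] hx; apply: IH.
  have := hs (a :: x); rewrite /= hx.
  have hS : \sum_(i < m) w (i :: a :: x) <= 0 by apply: sumr_le0 => i _.
  have hc : 0 <= (1 - beta) / m%:R by apply: divr_ge0; [lra|].
  have hp : (1 - beta) / m%:R * \sum_(i < m) w (i :: a :: x) <= 0.
    by rewrite mulr_ge0_le0.
  have := wle x; nra.
have down : forall z, w z = 0 -> forall i, w (i :: z) = 0.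
  move=> z hz i.
  have hS : 0 <= \sum_(j < m) w (j :: z).
    have := hs z; case: z hz => [|a z] hz /=; rewrite hz.
      have hm0 : 0 < m%:R^-1 :> R by rewrite invr_gt0 ltr0n (leq_trans _ hm).
      move=> h; rewrite -(pmulr_rge0 _ hm0) //.
    have hm0 : 0 < (1 - beta) / m%:R.
      by apply: divr_gt0; [lra| rewrite ltr0n (leq_trans _ hm)].
    have := wle z; move=> hw h.
    rewrite -(pmulr_rge0 _ hm0); nra.
  have := @psumr_eq0P R _ xpredT (fun j => - w (j :: z)).
  rewrite sumrN => /(_ _ _ i isT) h.
  apply/eqP; rewrite -oppr_eq0; apply/eqP; apply: h.
    by move=> j _; rewrite oppr_ge0.
  by apply/eqP; rewrite oppr_eq0 eq_le hS andbT; apply: sumr_le0 => j _.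
have root0 := up x0 hx0.
have all0 : forall x, w x = 0.
  elim=> [//|a x IH]; exact: down.
move=> x; have := all0 x; rewrite /w => /eqP; rewrite subr_eq0 => /eqP ->.
done.
Qed.
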